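(* Let $A$ be a $\{0,1\}$-matrix and let $\mathcal{C}=\{\omega(1),\dots,\omega(M)\}\subset B_*(X_A)$ be a prefix code, $\Sigma_{A(\mathcal{C})}=\{1,\dots,M\}$. The following are equivalent: (1) for any $\gamma\in B_*(X_A)$ there exists $\eta\in B_*(X_A)$ with $\gamma\eta\in B_*(X_A)$ and there exists a unique finite sequence $(i_1,\dots,i_k)\in(\Sigma_{A(\mathcal{C})})^k$ with $\gamma\eta=\omega(i_1)\omega(i_2)\cdots\omega(i_k)$; (2) for any $x=(x_n)_{n\in\mathbb{N}}\in X_A$ there exist a unique increasing sequence $1<k_1<k_2<\cdots$ of positive integers and $i_1,i_2,\dots\in\Sigma_{A(\mathcal{C})}$ such that $x_{[1,k_1)}=\omega(i_1)$ and $x_{[k_n,k_{n+1})}=\omega(i_{n+1})$ for all $n\ge1$, i.e. $x$ has a unique factorization $x=\omega(i_1)\omega(i_2)\cdots$.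
   Context: For an $N\times N$ matrix $A$ with entries in $\{0,1\}$, $\Sigma_A=\{1,\dots,N\}$ and $X_A$ is the set of sequences $(x_n)_{n\in\mathbb{N}}$ in $\Sigma_A$ with $A(x_n,x_{n+1})=1$ for all $n$, with product topology. $B_k(X_A)$ is the set of admissible words of length $k$ (those occurring in elements of $X_A$), and $B_*(X_A)=\bigcup_{k\ge0}B_k(X_A)$ including the empty word. $x_{[a,b)}$ denotes the word $x_ax_{a+1}\cdots x_{b-1}$. A code is a nonempty $\mathcal{C}\subset B_*(X_A)$ such that any equality $\omega(i_1)\cdots\omega(i_k)=\omega(j_1)\cdots\omega(j_n)$ of concatenations of words of $\mathcal{C}$ forces $n=k$ and $\omega(i_m)=\omega(j_m)$ for all $m$; a prefix code is a code in which no word is a prefix of another. *)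

(* Defs.v *)
(* Alphabet {1..N} is rendered as 'I_N (0-based). *)
From mathcomp Require Import all_boot all_algebra.
Set Implicit Arguments. Unset Strict Implicit. Unset Printing Implicit Defensive.

Section Shift.
Variable N : nat.
Variable A : 'M[bool]_N.

(* X_A : one-sided sequences indexed by nat (0-based) with allowed transitions *)
Definition in_XA (x : nat -> 'I_N) : Prop := forall n, A (x n) (x n.+1).

Definition word (x : nat -> 'I_N) (a b : nat) : seq 'I_N :=
  [seq x j | j <- iota a (b - a)].

Definition admissible (w : seq 'I_N) : Prop :=
  w = [::] \/ exists x, in_XA x /\ exists a, w = word x a (a + size w).

Definition is_code (C : pred (seq 'I_N)) : Prop :=
  (exists w, C w) /\ (forall w, C w -> admissible w) /\
  (forall s t : seq (seq 'I_N), all C s -> all C t ->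
      flatten s = flatten t -> size s = size t /\ s = t).

Definition is_prefix_code (C : pred (seq 'I_N)) : Prop :=
  is_code C /\ forall u v, C u -> C v -> u <> v -> ~~ prefix u v.

Definition concat_code (M : nat) (omega : 'I_M -> seq 'I_N) (s : seq 'I_M) :=
  flatten (map omega s).

(* x = omega(i_0) omega(i_1) ... with cut points 0 < k_0 < k_1 < ... *)
Definition factorizes (M : nat) (omega : 'I_M -> seq 'I_N) (x : nat -> 'I_N)
  (k : nat -> nat) (i : nat -> 'I_M) : Prop :=
  0 < k 0 /\ (forall n, k n < k n.+1) /\
  word x 0 (k 0) = omega (i 0) /\
  (forall n, word x (k n) (k n.+1) = omega (i n.+1)).

End Shift.

(* Main.v *)
Require Import Defs.
From mathcomp Require Import all_boot all_algebra.
From mathcomp Require Import zify.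
Set Implicit Arguments.

Lemma size_word N (x : nat -> 'I_N) a b : size (word x a b) = b - a.
Proof. by rewrite /word size_map size_iota. Qed.

Lemma word_cat N (x : nat -> 'I_N) a b c :
  a <= b -> b <= c -> word x a c = word x a b ++ word x b c.
Proof.
move=> hab hbc; rewrite /word.
have -> : c - a = (b - a) + (c - b) by lia.
rewrite iotaD map_cat; congr (_ ++ map _ (iota _ _)); lia.
Qed.

Lemma word_shift N (x : nat -> 'I_N) a m :
  word (fun n => x (a + n)) 0 m = word x a (a + m).
Proof.
rewrite /word subn0 addKn.
have -> : iota a m = map (addn a) (iota 0 m) by rewrite -iotaDl addn0.
by rewrite -map_comp.
Qed.

Lemma adm_word N (A : 'M[bool]_N) y b c :
  in_XA A y -> b <= c -> admissible A (word y b c).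
Proof.
move=> hy hbc; right; exists y; split => //; exists b.
by rewrite size_word subnKC.
Qed.


Lemma omega_ne N (A : 'M[bool]_N) M (omega : 'I_M -> seq 'I_N)
  (Hcode : is_prefix_code A (fun w => w \in codom omega)) j :
  0 < size (omega j).
Proof.
case: Hcode => [[_ [_ H]] _].
case E: (omega j) => [|a l] //.
have := H [:: omega j] [::]; rewrite /= codom_f E => /(_ isT isT erefl).
by case.
Qed.

Lemma concat_inj N (A : 'M[bool]_N) M (omega : 'I_M -> seq 'I_N)
  (omega_inj : injective omega)
  (Hcode : is_prefix_code A (fun w => w \in codom omega)) s t :
  concat_code omega s = concat_code omega t -> s = t.
Proof.
case: Hcode => [[_ [_ H]] _] E.
have hall : forall u, all (fun w => w \in codom omega) (map omega u).
  by move=> u; apply/allP => w /mapP [j _ ->]; rewrite codom_f.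
have [_ ] := H _ _ (hall s) (hall t) E.
exact: inj_map.
Qed.

Lemma uniq_parse N (A : 'M[bool]_N) M (omega : 'I_M -> seq 'I_N)
  (omega_inj : injective omega)
  (Hcode : is_prefix_code A (fun w => w \in codom omega)) x p q q' a b :
  word x p q = omega a -> word x p q' = omega b -> a = b /\ q = q'.
Proof.
have ne := @omega_ne _ A _ omega Hcode.
wlog hq : q q' a b / q <= q'.
  move=> W h1 h2; case: (leqP q q') => h; first exact: W h1 h2.
  have [] := W q' q b a (ltnW h) h2 h1; done.
move=> h1 h2.
have pq : p < q by have := ne a; rewrite -h1 size_word; lia.
have := h2; rewrite (@word_cat _ x _ _ _ (ltnW pq) hq) h1 => E.
have pre : prefix (omega a) (omega b) by rewrite -E prefix_prefix.
case: Hcode => _ Hp.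
have eab : omega a = omega b.
  apply/eqP; apply/negPn/negP => /eqP hne.
  by have := Hp _ _ (codom_f _ _) (codom_f _ _) hne; rewrite pre.
have := congr1 size h1; have := congr1 size h2; rewrite eab !size_word.
move=> s1 s2; split; first exact: omega_inj.
lia.
Qed.

Unset Implicit Arguments.

Theorem mainTheorem4 (N : nat) (A : 'M[bool]_N) (M : nat)
  (omega : 'I_M -> seq 'I_N)
  (omega_inj : injective omega)
  (Hcode : is_prefix_code A (fun w => w \in codom omega)) :
  (forall gamma, admissible A gamma ->
     exists eta, admissible A eta /\ admissible A (gamma ++ eta) /\
       exists! s : seq 'I_M, gamma ++ eta = concat_code omega s)
  <->
  (forall x, in_XA A x ->
     exists k i, factorizes omega x k i /\
       forall k' i', factorizes omega x k' i' ->
         forall n, k' n = k n /\ i' n = i n).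
Proof.
have ne := @omega_ne _ A _ omega Hcode.
have up := @uniq_parse _ A _ omega omega_inj Hcode.
split.
- move=> H1 x Hx.
  have [j0 _] : exists j0 : 'I_M, True.
    case: Hcode => [[[w /codomP [j0 _]] _] _]; by exists j0.
  pose L := \max_(j : 'I_M) size (omega j).
  have hL : forall j, size (omega j) <= L by move=> j; apply: leq_bigmax.
  pose Good p := forall m, exists s : seq 'I_M,
      prefix (word x p (p + m)) (concat_code omega s).
  pose g p := odflt j0 [pick j | word x p (p + size (omega j)) == omega j].
  have peel : forall p m j s, L <= m ->
      prefix (word x p (p + m)) (concat_code omega (j :: s)) ->
      word x p (p + size (omega j)) = omega j /\
      prefix (word x (p + size (omega j)) (p + m)) (concat_code omega s).
    move=> p m j s hm /prefixP [t].
    have hl := hL j.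
    rewrite /concat_code /= (@word_cat _ x p (p + size (omega j)) (p + m));
      [|lia|lia].
    rewrite -catA => /eqP; rewrite eqseq_cat; last first.
      by rewrite size_word addKn.
    case/andP => /eqP h1 /eqP h2; split; first by rewrite {2}h1.
    by rewrite h2 prefix_prefix.
  have step : forall p, Good p ->
      word x p (p + size (omega (g p))) = omega (g p) /\
      Good (p + size (omega (g p))).
    move=> p Hg.
    have hgp : word x p (p + size (omega (g p))) = omega (g p).
      have [s hs] := Hg L.
      case: s hs => [|j s] hs.
        have := size_prefix hs; rewrite size_word /concat_code /=.
        have := ne j0; have := hL j0; lia.
      have [hj _] := peel p L j s (leqnn _) hs.
      rewrite /g; case: pickP => [j' /eqP //|Hn].
      by have := Hn j; rewrite hj eqxx.
    split => // m.
    have [s hs] := Hg (m + L).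
    case: s hs => [|j s] hs.
      have := size_prefix hs; rewrite size_word /concat_code /=.
      have := ne j0; have := hL j0; lia.
    have [hj hp] := peel p (m + L) j s (leq_addl _ _) hs.
    have [ejg _] := up _ _ _ _ _ _ hj hgp.
    subst j; exists s.
    apply: (@catl_prefix _ _ _ (word x (p + size (omega (g p)) + m) (p + (m + L)))).
    have hl := hL (g p).
    by rewrite -word_cat //; lia.
  pose f n := iter n (fun p => p + size (omega (g p))) 0.
  have good : forall n, Good (f n).
    elim => [|n IH].
      move=> m; have [|eta [_ [_ [s [hs _]]]]] := H1 (word x 0 (0 + m)).
        exact: adm_word.
      by exists s; rewrite -hs prefix_prefix.
    by rewrite /f iterS; apply: (step _ IH).2.
  exists (fun n => f n.+1), (fun n => g (f n)).
  have fact : factorizes omega x (fun n => f n.+1) (fun n => g (f n)).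
    split; first by rewrite /f /= add0n ne.
    split; first by move=> n; rewrite /f iterS -/(f n.+1) -ltn_psubLR ?subnn ?ne //; lia.
    split; first by have := (step _ (good 0)).1; rewrite /f /= add0n.
    move=> n; have := (step _ (good n.+1)).1.
    by rewrite /f [iter n.+2 _ _]iterS.
  split => // k' i' [k0 [kinc [kw0 kw]]].
  case: fact => [_ [_ [w0 wS]]].
  elim => [|n [IHk IHi]].
    by have [-> ->] := up _ _ _ _ _ _ kw0 w0.
  have := kw n; rewrite IHk => h.
  by have [-> ->] := up _ _ _ _ _ _ h (wS n).
- move=> H2 gamma [->|[x [Hx [a Hg]]]].
    exists [::]; split; first by left.
    split; first by left.
    exists [::]; split => // s hs.
    by apply: (concat_inj omega_inj Hcode).
  pose y := fun n => x (a + n).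
  have Hy : in_XA A y by move=> n; rewrite /y addnS; exact: Hx.
  have [k [i [[k0 [kinc [kw0 kw]]] _]]] := H2 y Hy.
  have kge : forall n, n < k n.
    elim => [|n IH] //; have := kinc n; lia.
  have kmono : forall n, 0 <= k n by [].
  have cat : forall n, word y 0 (k n) = concat_code omega (map i (iota 0 n.+1)).
    elim => [|n IH]; first by rewrite /concat_code /= cats0.
    rewrite (@word_cat _ y 0 (k n) (k n.+1)) //; last exact: ltnW.
    rewrite IH kw -[n.+2]addn1 iotaD map_cat /concat_code map_cat flatten_cat /=.
    by rewrite cats0.
  set g := size gamma.
  have hgam : gamma = word y 0 g by rewrite word_shift.
  exists (word y g (k g)); split; first exact/adm_word/ltnW.
  rewrite hgam -word_cat //; last exact: ltnW.
  split; first exact: adm_word.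
  exists (map i (iota 0 g.+1)); split; first exact: cat.
  move=> s hs; apply: (@concat_inj _ A _ omega omega_inj Hcode _ _); by rewrite -hs cat.
Qed.
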